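(* Let $f:\mathbb{N}\to\mathbb{N}$ be a sub-linear order and let $f^*$ be its star-transform. Then: (1) $f^*$ is a sub-linear order; (2) if $f$ is computable then $f^*$ is computable; (3) if $f$ is upper semi-computable then $f^*$ is upper semi-computable; (4) for all $n,i\in\mathbb{N}$, $0\le f^*(n)-f^*(f^{(i)}(n))\le i$.
   Context: An order is a total, non-decreasing, unbounded function $\mathbb{N}\to\mathbb{N}$; it is sub-linear if $f(n)=o(n)$. $f^{(k)}$ denotes the $k$-fold iterate of $f$ ($f^{(0)}$ is the identity). For a sub-linear order $f$, let $p_f=\max\{n : f(n)\ge n\}$ (well defined by sub-linearity), and define the star-transform $f^*(n)=\min\{k : f^{(k)}(n)\le p_f\}$. A function $g:\mathbb{N}\to\mathbb{N}$ is upper semi-computable if the predicate ''$g(n)\le k$'' is computably enumerable uniformly in $n,k$. *)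

(* Defs.v *)
(* Computability is formalized via Kleene's partial recursive
   functions (mu-recursive functions) with a big-step relational semantics. *)
From Stdlib Require Import Arith List ClassicalEpsilon.
Import ListNotations.

(* Programs act on argument lists; [Proj i] returns the i-th argument
   (default 0), [Prec f g] recurses on the first argument,
   [Mu f] is unbounded minimisation on the first argument. *)
Inductive prog : Type :=
| PZero : prog
| PSucc : prog
| PProj : nat -> prog
| PComp : prog -> list prog -> prog
| PPrec : prog -> prog -> prog
| PMu   : prog -> prog.

Inductive eval : prog -> list nat -> nat -> Prop :=
| ev_zero : forall v, eval PZero v 0
| ev_succ : forall v, eval PSucc v (S (hd 0 v))
| ev_proj : forall i v, eval (PProj i) v (nth i v 0)
| ev_comp : forall f gs v ws y,
    evals gs v ws -> eval f ws y -> eval (PComp f gs) v y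
| ev_prec0 : forall f g v y,
    eval f v y -> eval (PPrec f g) (0 :: v) y
| ev_precS : forall f g n v r y,
    eval (PPrec f g) (n :: v) r -> eval g (n :: r :: v) y ->
    eval (PPrec f g) (S n :: v) y
| ev_mu : forall f v y,
    eval f (y :: v) 0 ->
    (forall z, z < y -> exists w, eval f (z :: v) (S w)) ->
    eval (PMu f) v y
with evals : list prog -> list nat -> list nat -> Prop :=
| evs_nil : forall v, evals [] v []
| evs_cons : forall g gs v w ws,
    eval g v w -> evals gs v ws -> evals (g :: gs) v (w :: ws).

Definition computable (f : nat -> nat) : Prop :=
  exists e : prog, forall n, eval e [n] (f n).

Definition ce_rel (P : nat -> nat -> Prop) : Prop :=
  exists e : prog, forall n k, P n k <-> exists y, eval e [n; k] y.

Definition upper_semi_computable (g : nat -> nat) : Prop :=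
  ce_rel (fun n k => g n <= k).

Definition is_order (f : nat -> nat) : Prop :=
  (forall m n, m <= n -> f m <= f n) /\ (forall k, exists n, k <= f n).

(* f(n) = o(n): for every m > 0, eventually m * f n <= n
   (i.e. f n / n <= 1/m eventually). *)
Definition sublinear (f : nat -> nat) : Prop :=
  forall m, 0 < m -> exists N, forall n, N <= n -> m * f n <= n.

Definition sublinear_order (f : nat -> nat) : Prop :=
  is_order f /\ sublinear f.

Definition iter_fun (f : nat -> nat) (k : nat) (n : nat) : nat :=
  Nat.iter k f n.

(* p_f = max { n | f n >= n } (chosen by Hilbert's epsilon; it is the
   maximum whenever that maximum exists, e.g. for sub-linear f). *)
Definition pf (f : nat -> nat) : nat :=
  epsilon (inhabits 0) (fun p => p <= f p /\ forall n, n <= f n -> n <= p).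

Definition fstar (f : nat -> nat) (n : nat) : nat :=
  epsilon (inhabits 0)
    (fun k => iter_fun f k n <= pf f /\
              forall j, iter_fun f j n <= pf f -> k <= j).

(* Main.v *)
Require Import Defs.
From Stdlib Require Import Arith Lia List Classical ClassicalEpsilon.
Import ListNotations.

Section PInd.
Variable Q : prog -> Prop.
Hypothesis HZ : Q PZero.
Hypothesis HS : Q PSucc.
Hypothesis HP : forall i, Q (PProj i).
Hypothesis HC : forall f gs, Q f -> Forall Q gs -> Q (PComp f gs).
Hypothesis HR : forall f g, Q f -> Q g -> Q (PPrec f g).
Hypothesis HM : forall f, Q f -> Q (PMu f).
Fixpoint prog_ind2 (h : prog) : Q h :=
  match h with
  | PZero => HZ | PSucc => HS | PProj i => HP i
  | PComp f gs => HC f gs (prog_ind2 f)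
      ((fix L (l : list prog) : Forall Q l :=
         match l with [] => Forall_nil _ | g :: r => Forall_cons _ (prog_ind2 g) (L r) end) gs)
  | PPrec f g => HR f g (prog_ind2 f) (prog_ind2 g)
  | PMu f => HM f (prog_ind2 f)
  end.
End PInd.

Lemma evals_length : forall gs v ws, evals gs v ws -> length ws = length gs.
Proof. induction gs; intros v ws H; inversion H; subst; simpl; auto. f_equal; eauto. Qed.

Lemma det : forall h v y y', eval h v y -> eval h v y' -> y = y'.
Proof.
  induction h using prog_ind2; intros v y y' H1 H2.
  - inversion H1; inversion H2; subst; auto.
  - inversion H1; inversion H2; subst; auto.
  - inversion H1; inversion H2; subst; auto.
  - inversion H1 as [| | |? ? ? ws ? A F| | |]; subst.
    inversion H2 as [| | |? ? ? ws0 ? B F'| | |]; subst.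
    assert (ws = ws0).
    { clear H1 H2 F F'. revert ws ws0 A B. induction H; intros ws ws0 A B.
      - inversion A; inversion B; auto.
      - inversion A; inversion B; subst. f_equal; eauto. }
    subst; eauto.
  - revert y y' H1 H2. destruct v as [|n v]; intros y y' H1 H2; [inversion H1|].
    revert y y' H1 H2. induction n; intros y y' H1 H2.
    + inversion H1; inversion H2; subst; eauto.
    + inversion H1; inversion H2; subst.
      assert (r = r0) by eauto. subst. eauto.
  - inversion H1; inversion H2; subst.
    destruct (lt_eq_lt_dec y y') as [[hh|hh]|hh]; auto.
    + destruct (H8 y hh) as [w Hw]. pose proof (IHh _ _ _ H0 Hw). discriminate.
    + destruct (H3 y' hh) as [w Hw]. pose proof (IHh _ _ _ H7 Hw). discriminate.
Qed.

Definition PRED := PPrec PZero (PProj 0).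
Definition COND := PPrec (PProj 0) (PProj 3).
Definition IF c x y := PComp COND [c; x; y].
Fixpoint CONST c := match c with 0 => PZero | S c => PComp PSucc [CONST c] end.
Fixpoint SUBC p := match p with 0 => PProj 0 | S p => PComp PRED [SUBC p] end.
Fixpoint ADDC p := match p with 0 => PProj 0 | S p => PComp PSucc [ADDC p] end.

Lemma ev_comp1 : forall f g v w y, eval g v w -> eval f [w] y -> eval (PComp f [g]) v y.
Proof. intros. econstructor; eauto. repeat constructor; auto. Qed.

Lemma ev_pred : forall x v, eval PRED (x :: v) (pred x).
Proof.
  induction x; intros v. constructor; constructor.
  econstructor. apply IHx. simpl. apply (ev_proj 0 (x :: pred x :: v)).
Qed.

Lemma ev_cond : forall a b c, eval COND [a; b; c] (match a with 0 => b | S _ => c end).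
Proof.
  induction a; intros.
  - constructor. apply (ev_proj 0 [b;c]).
  - econstructor. apply IHa. apply (ev_proj 3 (a :: _ :: b :: c :: [])).
Qed.

Lemma ev_IF : forall c x y v a b1 b2, eval c v a -> eval x v b1 -> eval y v b2 ->
  eval (IF c x y) v (match a with 0 => b1 | S _ => b2 end).
Proof.
  intros. econstructor; [|apply ev_cond]. repeat constructor; auto.
Qed.

Lemma ev_const : forall c v, eval (CONST c) v c.
Proof. induction c; intros; simpl. constructor. eapply ev_comp1; eauto. constructor. Qed.

Lemma ev_subc : forall p x v, eval (SUBC p) (x :: v) (x - p).
Proof.
  induction p; intros; simpl. replace (x - 0) with x by lia. apply (ev_proj 0 (x :: v)).
  eapply ev_comp1; eauto. replace (x - S p) with (pred (x - p)) by lia. apply ev_pred.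
Qed.

Lemma ev_addc : forall p x v, eval (ADDC p) (x :: v) (x + p).
Proof.
  induction p; intros; simpl. replace (x + 0) with x by lia. apply (ev_proj 0 (x :: v)).
  eapply ev_comp1; eauto. replace (x + S p) with (S (x + p)) by lia. apply ev_succ.
Qed.

Lemma evals_projs : forall v pre, evals (map PProj (seq (length pre) (length v))) (pre ++ v) v.
Proof.
  induction v; intros pre; simpl. constructor.
  constructor.
  - replace a with (nth (length pre) (pre ++ a :: v) 0) at 2. constructor.
    rewrite app_nth2 by lia. rewrite Nat.sub_diag. reflexivity.
  - specialize (IHv (pre ++ [a])). rewrite length_app in IHv. simpl in IHv.
    rewrite Nat.add_1_r in IHv. rewrite <- app_assoc in IHv. exact IHv.
Qed.

Lemma ev_proj' : forall i v y, nth i v 0 = y -> eval (PProj i) v y.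
Proof. intros; subst; constructor. Qed.


Definition PREDP i := PComp PRED [PProj i].
Fixpoint gate (l : list nat) (body : prog) : prog :=
  match l with [] => body | i :: l => IF (PProj i) PZero (gate l body) end.
Definition FVp F a := PComp F (PProj 2 :: PProj 0 :: map PProj (seq 3 a)).
Definition MUSTEP F a :=
  IF (PProj 1)
     (IF (FVp F a) (CONST 1) (IF (PComp PRED [FVp F a]) (PComp PSucc [PComp PSucc [PProj 0]]) PZero))
     (PProj 1).
Definition GPp G a := PComp G (PProj 2 :: PProj 0 :: PREDP 1 :: map PProj (seq 3 a)).

Fixpoint T (h : prog) (a : nat) : prog :=
  match h with
  | PZero => PComp PSucc [PZero]
  | PSucc => PComp PSucc [PComp PSucc [PProj 1]]
  | PProj i => PComp PSucc [PProj (S i)]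
  | PComp f gs =>
      PComp (gate (seq 1 (length gs))
                  (PComp (T f (length gs)) (PProj 0 :: map PREDP (seq 1 (length gs)))))
            (PProj 0 :: map (fun g => T g a) gs)
  | PPrec f g =>
      match a with
      | 0 => PZero
      | S a' => PComp (PPrec (T f a') (IF (PProj 1) PZero (GPp (T g (S (S a'))) a')))
                      (PProj 1 :: PProj 0 :: map PProj (seq 2 a'))
      end
  | PMu f => PComp PRED [PComp (PPrec PZero (MUSTEP (T f (S a)) a))
                               (PProj 0 :: PProj 0 :: map PProj (seq 1 a))]
  end.

Lemma evals_det : forall gs v ws ws', evals gs v ws -> evals gs v ws' -> ws = ws'.
Proof.
  induction gs; intros v ws ws' A B; inversion A; inversion B; subst; auto.
  f_equal; eauto using det.
Qed.

Lemma comp_inv : forall F gs v y ws0, eval (PComp F gs) v y -> evals gs v ws0 -> eval F ws0 y.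
Proof.
  intros F gs v y ws0 H H0. inversion H as [| | |? ? ? ws ? A B| | |]; subst.
  rewrite (evals_det _ _ _ _ H0 A). auto.
Qed.

Lemma evals_preds : forall us pre,
  evals (map PREDP (seq (length pre) (length us))) (pre ++ us) (map pred us).
Proof.
  induction us; intros pre; simpl. constructor.
  constructor.
  - eapply ev_comp1. apply ev_proj'.
    rewrite app_nth2 by lia. rewrite Nat.sub_diag. reflexivity. apply ev_pred.
  - specialize (IHus (pre ++ [a])). rewrite length_app in IHus. simpl in IHus.
    rewrite Nat.add_1_r in IHus. rewrite <- app_assoc in IHus. exact IHus.
Qed.

Lemma evals_projs' : forall pre v k L, k = length pre -> L = pre ++ v ->
  evals (map PProj (seq k (length v))) L v.
Proof. intros; subst; apply evals_projs. Qed.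

Lemma gate_ok : forall l body L y, eval body L y -> (forall i, In i l -> nth i L 0 <> 0) ->
  eval (gate l body) L y.
Proof.
  induction l; intros body L y H1 H2; simpl; auto.
  assert (nth a L 0 <> 0) by (apply H2; simpl; auto).
  pose proof (ev_IF (PProj a) PZero (gate l body) L _ 0 y (ev_proj a L) (ev_zero L)
     (IHl _ _ _ H1 (fun i Hi => H2 i (or_intror Hi)))).
  destruct (nth a L 0); [congruence|auto].
Qed.

Lemma gate_total : forall l body L, (exists y, eval body L y) -> exists r, eval (gate l body) L r.
Proof.
  induction l; intros body L [y H]; simpl; eauto.
  destruct (IHl body L) as [r Hr]; eauto.
  eexists. apply ev_IF; eauto; constructor.
Qed.

Lemma gate_zero : forall l body L, (exists y, eval body L y) ->
  (exists i, In i l /\ nth i L 0 = 0) -> eval (gate l body) L 0.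
Proof.
  induction l; intros body L Hb [i [Hi Hz]]; simpl; [destruct Hi|].
  destruct (gate_total l body L Hb) as [r Hr].
  destruct Hi as [->|Hi].
  - pose proof (ev_IF (PProj i) PZero (gate l body) L _ 0 r (ev_proj i L) (ev_zero L) Hr).
    rewrite Hz in H. exact H.
  - pose proof (ev_IF (PProj a) PZero (gate l body) L _ 0 0 (ev_proj a L) (ev_zero L)
      (IHl body L Hb (ex_intro _ i (conj Hi Hz)))).
    destruct (nth a L 0); auto.
Qed.

Lemma ev_FV : forall F a m r t v u, length v = a -> eval F (t :: m :: v) u ->
  eval (FVp F a) (m :: r :: t :: v) u.
Proof.
  intros. subst a. econstructor; eauto. constructor. apply ev_proj'; reflexivity.
  constructor. apply ev_proj'; reflexivity.
  apply (evals_projs' [m;r;t]); auto.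
Qed.

Lemma ev_GP : forall G a i r t v u, length v = a -> eval G (t :: i :: pred r :: v) u ->
  eval (GPp G a) (i :: r :: t :: v) u.
Proof.
  intros. subst a. econstructor; eauto. constructor. apply ev_proj'; reflexivity.
  constructor. apply ev_proj'; reflexivity.
  constructor. eapply ev_comp1. apply ev_proj'; reflexivity. apply ev_pred.
  apply (evals_projs' [i;r;t]); auto.
Qed.

Definition msv (r u m : nat) : nat :=
  match r with 0 => match u with 0 => 1 | S 0 => S (S m) | _ => 0 end | S _ => r end.

Lemma ev_MS : forall F a m r t v u, length v = a -> eval F (t :: m :: v) u ->
  eval (MUSTEP F a) (m :: r :: t :: v) (msv r u m).
Proof.
  intros. pose proof (ev_FV F a m r t v u H H0) as HF.
  assert (A : eval (IF (FVp F a) (CONST 1) (IF (PComp PRED [FVp F a]) (PComp PSucc [PComp PSucc [PProj 0]]) PZero))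
      (m :: r :: t :: v) (match u with 0 => 1 | S 0 => S (S m) | _ => 0 end)).
  { pose proof (ev_IF _ _ _ _ _ _ _ HF (ev_const 1 _)
      (ev_IF _ _ _ _ _ _ _ (ev_comp1 _ _ _ _ _ HF (ev_pred u []))
         (ev_comp1 _ _ _ _ _ (ev_comp1 _ _ _ _ _ (ev_proj 0 (m :: r :: t :: v)) (ev_succ [m]))
            (ev_succ [S m])) (ev_zero _))).
    destruct u as [|[|u]]; exact H1. }
  pose proof (ev_IF _ _ _ _ _ _ _ (ev_proj 1 (m :: r :: t :: v)) A (ev_proj 1 (m :: r :: t :: v))).
  unfold msv. destruct r; exact H1.
Qed.

Definition total h := forall a t v, length v = a -> exists r, eval (T h a) (t :: v) r.
Definition sound h := forall a t v z, length v = a -> eval (T h a) (t :: v) (S z) -> eval h v z.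
Definition compl h := forall a v z, length v = a -> eval h v z ->
   exists t0, forall t, t0 <= t -> eval (T h a) (t :: v) (S z).


Lemma list_total : forall a t v gs, length v = a -> Forall total gs ->
  exists us, evals (map (fun g => T g a) gs) (t :: v) us.
Proof.
  induction gs; intros Hl HF; simpl. eexists; constructor.
  inversion HF; subst. destruct (H1 (length v) t v eq_refl) as [u Hu].
  destruct IHgs as [us Hus]; auto. eexists; constructor; eauto.
Qed.

Lemma args_prec : forall t n v', evals (PProj 1 :: PProj 0 :: map PProj (seq 2 (length v')))
   (t :: n :: v') (n :: t :: v').
Proof.
  intros. constructor. apply ev_proj'; reflexivity. constructor. apply ev_proj'; reflexivity.
  apply (evals_projs' [t;n]); auto.
Qed.

Lemma args_mu : forall t v, evals (PProj 0 :: PProj 0 :: map PProj (seq 1 (length v)))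
   (t :: v) (t :: t :: v).
Proof.
  intros. constructor. apply ev_proj'; reflexivity. constructor. apply ev_proj'; reflexivity.
  apply (evals_projs' [t]); auto.
Qed.

Lemma all_total : forall h, total h.
Proof.
  induction h using prog_ind2; intros a t v Hl; simpl.
  - eexists. eapply ev_comp1. constructor. constructor.
  - eexists. eapply ev_comp1. eapply ev_comp1. constructor. constructor. constructor.
  - eexists. eapply ev_comp1. constructor. constructor.
  - destruct (list_total a t v gs Hl H) as [us Hus].
    pose proof (evals_length _ _ _ Hus) as Hlen. rewrite length_map in Hlen.
    destruct (IHh (length gs) t (map pred us)) as [u Hu]. rewrite length_map; auto.
    assert (Hb : eval (PComp (T h (length gs)) (PProj 0 :: map PREDP (seq 1 (length gs)))) (t :: us) u).
    { econstructor; eauto. constructor. apply ev_proj'; reflexivity.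
      rewrite <- Hlen. apply (evals_preds us [t]). }
    destruct (gate_total (seq 1 (length gs)) _ _ (ex_intro _ u Hb)) as [r Hr].
    exists r. econstructor; eauto. constructor; auto. apply ev_proj'; reflexivity.
  - destruct a as [|a']. eexists; constructor.
    destruct v as [|n v']; [discriminate|]. simpl in Hl. injection Hl as Hl. subst a'.
    assert (forall n, exists s, eval (PPrec (T h1 (length v')) (IF (PProj 1) PZero (GPp (T h2 (S (S (length v')))) (length v'))))
        (n :: t :: v') s).
    { induction n0.
      - destruct (IHh1 (length v') t v' eq_refl) as [s Hs]. exists s. constructor; auto.
      - destruct IHn0 as [r Hr].
        destruct (IHh2 (S (S (length v'))) t (n0 :: pred r :: v') eq_refl) as [u Hu].
        eexists. econstructor. apply Hr.
        apply ev_IF. constructor. constructor. apply ev_GP; eauto. }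
    destruct (H n) as [s Hs]. exists s. econstructor. apply args_prec. auto.
  - subst a.
    assert (forall m, exists s, eval (PPrec PZero (MUSTEP (T h (S (length v))) (length v))) (m :: t :: v) s).
    { induction m.
      - eexists. constructor. constructor.
      - destruct IHm as [r Hr].
        destruct (IHh (S (length v)) t (m :: v) eq_refl) as [u Hu].
        eexists. econstructor. apply Hr. apply ev_MS; eauto. }
    destruct (H t) as [s Hs]. eexists. eapply ev_comp1. econstructor. apply args_mu. apply Hs.
    apply ev_pred.
Qed.


Lemma nz_gate : forall t us k, Forall (fun u => u <> 0) us -> length us = k ->
  forall i, In i (seq 1 k) -> nth i (t :: us) 0 <> 0.
Proof.
  intros t us k HF Hl i Hi. apply in_seq in Hi. destruct i; [lia|]. simpl.
  rewrite Forall_nth in HF. apply HF. lia.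
Qed.

Lemma list_sound : forall a t v gs, length v = a -> Forall sound gs ->
  forall us, evals (map (fun g => T g a) gs) (t :: v) us -> Forall (fun u => u <> 0) us ->
  evals gs v (map pred us).
Proof.
  induction gs; intros Hl HF us Hus Hnz; simpl in *; inversion Hus; subst. constructor.
  inversion HF; subst. inversion Hnz; subst. simpl. constructor; auto.
  destruct w; [congruence|]. simpl. match goal with Hs : sound _ |- _ => eapply Hs end; eauto.
Qed.

Lemma list_compl : forall a v gs ws, length v = a -> Forall compl gs -> evals gs v ws ->
  exists t0, forall t, t0 <= t -> evals (map (fun g => T g a) gs) (t :: v) (map S ws).
Proof.
  induction gs; intros ws Hl HF Hws; inversion Hws as [|? ? ? w ws0 Hw Hws0]; subst; simpl.
  - exists 0; intros; constructor.
  - inversion HF as [|? ? Hc HF']; subst. destruct (Hc _ _ _ eq_refl Hw) as [t1 H1'].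
    destruct (IHgs ws0) as [t2 H2']; auto.
    exists (max t1 t2). intros t Ht. constructor. apply H1'; lia. apply H2'; lia.
Qed.

Definition SE F a := PPrec PZero (MUSTEP F a).

Lemma search_inv : forall F v t, (forall m, exists u, eval F (t :: m :: v) u) ->
  forall m s, eval (SE F (length v)) (m :: t :: v) s ->
  (s = 0 /\ forall z, z < m -> exists w, eval F (t :: z :: v) (S (S w))) \/ s = 1 \/
  (exists y, s = S (S y) /\ eval F (t :: y :: v) 1 /\
      forall z, z < y -> exists w, eval F (t :: z :: v) (S (S w))).
Proof.
  intros F v t HT. induction m; intros s H.
  - inversion H as [| | | |? ? ? ? H4| |]; subst. inversion H4; subst. left; split; auto; intros; lia.
  - inversion H as [| | | | |? ? ? ? r ? Hr Hs|]; subst.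
    destruct (HT m) as [u Hu].
    pose proof (ev_MS _ _ m r t v u eq_refl Hu) as Hm. pose proof (det _ _ _ _ Hs Hm). subst s.
    destruct (IHm r Hr) as [[-> Hz]|[->|[y [-> [Hy Hz]]]]]; unfold msv.
    + destruct u as [|[|u]].
      * right; left; auto.
      * right; right. exists m. auto.
      * left. split; auto. intros z Hz'. destruct (Nat.eq_dec z m). subst; eauto. apply Hz; lia.
    + right; left; auto.
    + right; right; eauto.
Qed.

Lemma search_zero : forall F v t m, (forall z, z < m -> exists w, eval F (t :: z :: v) (S (S w))) ->
  eval (SE F (length v)) (m :: t :: v) 0.
Proof.
  intros F v t. induction m; intros H. constructor; constructor.
  destruct (H m) as [w Hw]; [lia|].
  econstructor. apply IHm; intros; apply H; lia.
  apply (ev_MS _ _ m 0 t v _ eq_refl Hw).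
Qed.

Lemma search_found : forall F v t y, (forall m, exists u, eval F (t :: m :: v) u) ->
  eval F (t :: y :: v) 1 -> (forall z, z < y -> exists w, eval F (t :: z :: v) (S (S w))) ->
  forall m, y < m -> eval (SE F (length v)) (m :: t :: v) (S (S y)).
Proof.
  intros F v t y HT Hy Hz. induction m; intros Hm; [lia|].
  destruct (Nat.eq_dec m y).
  - subst. econstructor. apply search_zero; auto. apply (ev_MS _ _ y 0 t v _ eq_refl Hy).
  - destruct (HT m) as [u Hu]. econstructor. apply IHm; lia.
    apply (ev_MS _ _ m (S (S y)) t v _ eq_refl Hu).
Qed.

Lemma all_sc : forall h, sound h /\ compl h.
Proof.
  induction h using prog_ind2; split.
  - intros a t v z Hl H. simpl in H.
    assert (eval (PComp PSucc [PZero]) (t :: v) 1) by (eapply ev_comp1; constructor).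
    pose proof (det _ _ _ _ H H0). injection H1 as ->. constructor.
  - intros a v z Hl H. inversion H; subst. exists 0. intros. eapply ev_comp1; constructor.
  - intros a t v z Hl H. simpl in H.
    assert (eval (PComp PSucc [PComp PSucc [PProj 1]]) (t :: v) (S (S (hd 0 v)))).
    { eapply ev_comp1. eapply ev_comp1. apply (ev_proj' 1 (t :: v) (hd 0 v)). destruct v; reflexivity.
      constructor. constructor. }
    pose proof (det _ _ _ _ H H0). injection H1 as ->. constructor.
  - intros a v z Hl H. inversion H; subst. exists 0. intros. eapply ev_comp1.
    eapply ev_comp1. apply (ev_proj' 1 (t :: v) (hd 0 v)). destruct v; reflexivity. constructor. constructor.
  - intros a t v z Hl H. simpl in H.
    assert (eval (PComp PSucc [PProj (S i)]) (t :: v) (S (nth i v 0))).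
    { eapply ev_comp1. apply ev_proj'. reflexivity. constructor. }
    pose proof (det _ _ _ _ H H0). injection H1 as ->. constructor.
  - intros a v z Hl H. inversion H; subst. exists 0. intros. eapply ev_comp1.
    apply ev_proj'. reflexivity. constructor.
  - intros a t v z Hl H0. simpl in H0.
    assert (HT : Forall total gs) by (apply Forall_forall; intros; apply all_total).
    destruct (list_total a t v gs Hl HT) as [us Hus].
    pose proof (evals_length _ _ _ Hus) as Hlen. rewrite length_map in Hlen.
    destruct (all_total h (length gs) t (map pred us)) as [u Hu]. rewrite length_map; auto.
    assert (Hb : eval (PComp (T h (length gs)) (PProj 0 :: map PREDP (seq 1 (length gs)))) (t :: us) u).
    { econstructor; eauto. constructor. apply ev_proj'; reflexivity.
      rewrite <- Hlen. apply (evals_preds us [t]). }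
    assert (Hg := comp_inv _ _ _ _ (t :: us) H0 (evs_cons _ _ _ _ _ (ev_proj 0 (t :: v)) Hus)).
    destruct (classic (Forall (fun u => u <> 0) us)) as [Hnz|Hnz].
    + pose proof (gate_ok _ _ _ _ Hb (nz_gate t us _ Hnz Hlen)).
      pose proof (det _ _ _ _ Hg H1). subst u.
      apply (proj1 IHh) in Hu; [|rewrite length_map; auto].
      econstructor; eauto. eapply list_sound; eauto.
      eapply Forall_impl; [|exact H]. intros p Hp; apply Hp.
    + apply neg_Forall_Exists_neg in Hnz; [|intro x; destruct (Nat.eq_dec x 0); [right|left]; auto].
      apply Exists_exists in Hnz. destruct Hnz as [x [Hx Hx0]].
      assert (x = 0) by lia. subst x.
      destruct (In_nth us 0 0 Hx) as [j [Hj Hj0]].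
      assert (eval (gate (seq 1 (length gs)) (PComp (T h (length gs)) (PProj 0 :: map PREDP (seq 1 (length gs))))) (t :: us) 0).
      { apply gate_zero. eauto. exists (S j). split. apply in_seq; lia. simpl; auto. }
      pose proof (det _ _ _ _ Hg H1). discriminate.
  - intros a v z Hl H0. inversion H0 as [| | |? ? ? ws ? Hws Hf| | |]; subst.
    destruct (list_compl _ v gs ws eq_refl (Forall_impl _ (fun p Hp => proj2 Hp) H) Hws) as [t1 H1].
    pose proof (evals_length _ _ _ Hws) as Hlen.
    destruct (proj2 IHh _ _ _ Hlen Hf) as [t2 H2].
    exists (max t1 t2). intros t Ht. simpl.
    econstructor. constructor. apply ev_proj'; reflexivity. apply H1; lia.
    apply gate_ok.
    + econstructor. constructor. apply ev_proj'; reflexivity.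
      rewrite <- Hlen. rewrite <- (length_map S ws). apply (evals_preds _ [t]).
      rewrite map_map. simpl. rewrite map_id. apply H2; lia.
    + apply nz_gate. apply Forall_map. apply Forall_forall; intros; lia.
      rewrite length_map; auto.
  - intros a t v z Hl H. destruct a as [|a'].
    { simpl in H. inversion H. }
    destruct v as [|n v']; [discriminate|]. simpl in Hl. injection Hl as Hl. subst a'.
    simpl in H. pose proof (comp_inv _ _ _ _ _ H (args_prec t n v')) as H1. clear H.
    revert z H1. induction n; intros z H1.
    + inversion H1; subst. constructor. eapply (proj1 IHh1); eauto.
    + inversion H1 as [| | | | |? ? ? ? r ? Hr Hs|]; subst.
      destruct (all_total h2 (S (S (length v'))) t (n :: pred r :: v') eq_refl) as [u Hu].
      pose proof (ev_IF (PProj 1) PZero _ _ _ _ _ (ev_proj 1 (n :: r :: t :: v')) (ev_zero _)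
         (ev_GP _ _ _ _ _ _ _ eq_refl Hu)).
      pose proof (det _ _ _ _ Hs H). simpl in H0. destruct r; [discriminate|]. subst u.
      econstructor. apply IHn; eauto. eapply (proj1 IHh2); [|exact Hu]. reflexivity.
  - intros a v z Hl H. destruct a as [|a'].
    { destruct v; [|discriminate]. inversion H. }
    destruct v as [|n v']; [discriminate|]. simpl in Hl. injection Hl as Hl. subst a'.
    assert (forall n z, eval (PPrec h1 h2) (n :: v') z -> exists t0, forall t, t0 <= t ->
        eval (PPrec (T h1 (length v')) (IF (PProj 1) PZero (GPp (T h2 (S (S (length v')))) (length v'))))
           (n :: t :: v') (S z)).
    { clear n z H. induction n; intros z H; inversion H as [| | | |? ? ? ? H4|? ? ? ? r ? H2 H6|]; subst.
      - destruct (proj2 IHh1 _ _ _ eq_refl H4) as [t0 Ht]. exists t0. intros. constructor; auto.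
      - destruct (IHn _ H2) as [t1 H1]. destruct (proj2 IHh2 _ _ _ eq_refl H6) as [t2 H3].
        exists (max t1 t2). intros t Ht. econstructor. apply H1; lia.
        pose proof (ev_IF (PProj 1) PZero _ _ _ _ _ (ev_proj 1 (n :: S r :: t :: v')) (ev_zero _)
         (ev_GP _ _ n (S r) t v' (S z) eq_refl (H3 t ltac:(lia)))). exact H0. }
    destruct (H0 _ _ H) as [t0 Ht]. exists t0. intros t Htt. simpl.
    econstructor. apply args_prec. auto.
  - intros a t v z Hl H. subst a. simpl in H.
    assert (HT : forall m, exists u, eval (T h (S (length v))) (t :: m :: v) u).
    { intro m. apply (all_total h (S (length v)) t (m :: v) eq_refl). }
    inversion H as [| | |? ? ? ws ? Hws Hp| | |]; subst.
    inversion Hws as [|? ? ? s ? Hx Hnil]; subst. inversion Hnil; subst.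
    pose proof (det _ _ _ _ Hp (ev_pred s [])). destruct s as [|[|s]]; try discriminate.
    simpl in H0. injection H0 as ->.
    pose proof (comp_inv _ _ _ _ _ Hx (args_mu t v)) as Hs.
    destruct (search_inv _ _ _ HT _ _ Hs) as [[? _]|[?|[y [Hy [Hy1 Hz]]]]]; try discriminate.
    injection Hy as ->. constructor.
    + apply (proj1 IHh _ t (y :: v) 0 eq_refl Hy1).
    + intros z' Hz'. destruct (Hz z' Hz') as [w Hw]. exists w.
      apply (proj1 IHh _ t (z' :: v) _ eq_refl Hw).
  - intros a v z Hl H. subst a.
    inversion H as [| | | | | |? ? ? H0 H3]; subst.
    assert (HT : forall t m, exists u, eval (T h (S (length v))) (t :: m :: v) u).
    { intros t m. apply (all_total h (S (length v)) t (m :: v) eq_refl). }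
    assert (U : forall y', y' <= z -> exists t0, forall t, t0 <= t -> forall z', z' < y' ->
        exists w, eval (T h (S (length v))) (t :: z' :: v) (S (S w))).
    { induction y'; intros Hy'. exists 0; intros; lia.
      destruct IHy' as [t1 H1]; [lia|].
      destruct (H3 y') as [w Hw]; [lia|].
      destruct (proj2 IHh _ _ _ eq_refl Hw) as [t2 H2].
      exists (max t1 t2). intros t Ht z' Hz'. destruct (Nat.eq_dec z' y').
      - subst. exists w. apply H2; lia.
      - apply H1; lia. }
    destruct (U z (le_n _)) as [t1 H1].
    destruct (proj2 IHh _ _ _ eq_refl H0) as [t2 H2].
    exists (max (max t1 t2) (S z)). intros t Ht. simpl.
    eapply ev_comp1; [|apply (ev_pred (S (S z)) [])].
    econstructor. apply args_mu. apply search_found; auto.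
    apply H2; lia. apply H1; lia. lia.
Qed.


Section MathS.
Variable f : nat -> nat.
Hypothesis Hf : sublinear_order f.

Lemma mono : forall m n, m <= n -> f m <= f n.
Proof. apply Hf. Qed.

Lemma max_exists : forall B (P : nat -> Prop), P 0 -> (forall n, P n -> n <= B) ->
  exists p, P p /\ forall n, P n -> n <= p.
Proof.
  induction B; intros P H0 HB.
  - exists 0; split; auto.
  - destruct (classic (P (S B))) as [H|H].
    + exists (S B); split; auto.
    + apply IHB; auto. intros n Hn. specialize (HB n Hn).
      destruct (Nat.eq_dec n (S B)); [subst; tauto| lia].
Qed.

Lemma pf_spec : pf f <= f (pf f) /\ forall n, n <= f n -> n <= pf f.
Proof.
  unfold pf. apply epsilon_spec.
  destruct Hf as [_ Hs]. destruct (Hs 2) as [N HN]; [lia|].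
  apply (max_exists N); [lia|].
  intros n Hn. destruct (le_lt_dec N n) as [h|h]; [|lia].
  specialize (HN n h). assert (f n = 0) by lia. lia.
Qed.

Notation P := (pf f).

Lemma fP : f P = P.
Proof.
  destruct pf_spec as [H1 H2].
  assert (f P <= P); [|lia].
  apply H2. apply mono. auto.
Qed.

Lemma f_le_P : forall x, x <= P -> f x <= P.
Proof. intros. rewrite <- fP. apply mono; auto. Qed.

Lemma f_lt : forall x, P < x -> f x < x.
Proof.
  intros x Hx. destruct (le_lt_dec x (f x)) as [h|h]; auto.
  apply (proj2 pf_spec) in h. lia.
Qed.

Lemma f_bound : forall x, f x <= x + P.
Proof.
  intros x. destruct (le_lt_dec x P).
  - pose proof (f_le_P x l). lia.
  - pose proof (f_lt x l). lia.
Qed.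

Lemma iter_S : forall k n, iter_fun f (S k) n = iter_fun f k (f n).
Proof. intros. unfold iter_fun. apply Nat.iter_succ_r. Qed.

Lemma iter_S' : forall k n, iter_fun f (S k) n = f (iter_fun f k n).
Proof. intros. reflexivity. Qed.

Lemma iter_add : forall p q n, iter_fun f (p + q) n = iter_fun f p (iter_fun f q n).
Proof. intros. unfold iter_fun. apply Nat.iter_add. Qed.

Lemma iter_mono : forall k m n, m <= n -> iter_fun f k m <= iter_fun f k n.
Proof. induction k; intros; simpl; auto. apply mono. apply IHk; auto. Qed.

Lemma iter_stay : forall k x, x <= P -> iter_fun f k x <= P.
Proof. induction k; intros; simpl; auto. apply f_le_P. apply IHk; auto. Qed.

Lemma reach : forall n, exists k, iter_fun f k n <= P.
Proof.
  intro n. induction n as [n IH] using lt_wf_ind.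
  destruct (le_lt_dec n P) as [h|h].
  - exists 0; simpl; auto.
  - destruct (IH (f n) (f_lt n h)) as [k Hk]. exists (S k). rewrite iter_S; auto.
Qed.

Lemma min_exists : forall (Q : nat -> Prop) m, Q m -> exists k, Q k /\ forall j, Q j -> k <= j.
Proof.
  intros Q m. induction m as [m IH] using lt_wf_ind. intros Hm.
  destruct (classic (exists j, j < m /\ Q j)) as [[j [Hj Qj]]|H].
  - exact (IH j Hj Qj).
  - exists m; split; auto. intros j Qj. destruct (le_lt_dec m j); auto.
    exfalso; apply H; eauto.
Qed.

Lemma fstar_spec : forall n, iter_fun f (fstar f n) n <= P /\
   forall j, iter_fun f j n <= P -> fstar f n <= j.
Proof.
  intro n. unfold fstar. apply epsilon_spec.
  destruct (reach n) as [k Hk]. apply (min_exists _ k Hk).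
Qed.

Lemma fstar_le : forall n k, fstar f n <= k <-> iter_fun f k n <= P.
Proof.
  intros n k. destruct (fstar_spec n) as [H1 H2]. split; intro H.
  - replace k with ((k - fstar f n) + fstar f n) by lia.
    rewrite iter_add. apply iter_stay; auto.
  - apply H2; auto.
Qed.

Lemma fstar_iter : forall n i, fstar f (iter_fun f i n) = fstar f n - i.
Proof.
  intros n i.
  assert (E: forall k, fstar f (iter_fun f i n) <= k <-> fstar f n <= k + i).
  { intro k. rewrite !fstar_le, iter_add. tauto. }
  pose proof (proj1 (E _) (le_n _)).
  pose proof (proj2 (E (fstar f n - i))).
  assert (fstar f n <= fstar f n - i + i) by lia. specialize (H0 H1). lia.
Qed.

Lemma part4 : forall n i,
        fstar f (iter_fun f i n) <= fstar f n
        /\ fstar f n - fstar f (iter_fun f i n) <= i.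
Proof. intros. rewrite fstar_iter. lia. Qed.

Lemma fstar_mono : forall m n, m <= n -> fstar f m <= fstar f n.
Proof.
  intros m n H. apply fstar_le. eapply Nat.le_trans.
  apply iter_mono; eauto. apply fstar_le; auto.
Qed.

Lemma iter_unb : forall j M, exists n, M <= iter_fun f j n.
Proof.
  induction j; intros M.
  - exists M; simpl; auto.
  - destruct (proj2 (proj1 Hf) M) as [x Hx]. destruct (IHj x) as [n Hn].
    exists n. rewrite iter_S'. eapply Nat.le_trans; eauto. apply mono; auto.
Qed.

Lemma fstar_step : forall n, fstar f n <= S (fstar f (f n)).
Proof. intros. pose proof (fstar_iter n 1). simpl in H. unfold iter_fun in H; simpl in H. lia. Qed.

Lemma part1 : sublinear_order (fstar f).
Proof.
  split; [split|].
  - apply fstar_mono.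
  - intro k. destruct k. exists 0; lia.
    destruct (iter_unb k (S P)) as [n Hn]. exists n.
    destruct (le_lt_dec (S k) (fstar f n)); auto.
    assert (iter_fun f k n <= P) by (apply fstar_le; lia). lia.
  - assert (claim : forall m, 0 < m -> exists D, forall n, m * fstar f n <= n + D).
    { intros m Hm. destruct (proj2 Hf 2) as [N HN]; [lia|].
      set (K := N + 2 * m). exists (m * fstar f K).
      intro n. induction n as [n IH] using lt_wf_ind.
      destruct (le_lt_dec n K) as [h|h].
      - pose proof (fstar_mono _ _ h). nia.
      - assert (h2 : 2 * f n <= n) by (apply HN; lia).
        assert (f n < n) by lia. specialize (IH _ H).
        pose proof (fstar_step n). nia. }
    intros m Hm. destruct (claim (2*m)) as [D HD]; [lia|].
    exists D. intros n Hn. specialize (HD n). nia.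
Qed.

End MathS.


Section Fin.
Variable f : nat -> nat.
Hypothesis Hf : sublinear_order f.
Notation P := (pf f).

Definition ITF e := PPrec (PProj 0) (PComp e [PProj 1]).

Lemma part2 : computable f -> computable (fstar f).
Proof.
  intros [e He]. exists (PMu (PComp (SUBC P) [ITF e])). intro n.
  assert (HI : forall k, eval (ITF e) (k :: [n]) (iter_fun f k n)).
  { induction k. constructor. apply (ev_proj 0 [n]).
    econstructor. apply IHk. eapply ev_comp1. apply (ev_proj 1 (k :: iter_fun f k n :: [n])).
    apply He. }
  assert (HT : forall k, eval (PComp (SUBC P) [ITF e]) (k :: [n]) (iter_fun f k n - P)).
  { intro k. eapply ev_comp1. apply HI. apply ev_subc. }
  destruct (fstar_spec f Hf n) as [H1 H2].
  constructor.
  - replace 0 with (iter_fun f (fstar f n) n - P) by lia. apply HT.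
  - intros z Hz. exists (iter_fun f z n - P - 1).
    replace (S (iter_fun f z n - P - 1)) with (iter_fun f z n - P); [apply HT|].
    destruct (le_lt_dec (iter_fun f z n) P) as [h|h]; [|lia].
    apply H2 in h. lia.
Qed.

Section USC.
Variable e : prog.
Hypothesis He : forall n k, f n <= k <-> exists y, eval e [n; k] y.
Let E := T e 2.

Lemma Esound : forall s x y z, eval E (s :: [x; y]) (S z) -> f x <= y.
Proof. intros. apply He. exists z. apply (proj1 (all_sc e) 2 s [x;y] z eq_refl H). Qed.

Lemma Ecompl : forall x y, f x <= y -> exists t0, forall s, t0 <= s -> exists z, eval E (s :: [x; y]) (S z).
Proof.
  intros x y H. apply He in H. destruct H as [z Hz].
  destruct (proj2 (all_sc e) 2 [x;y] z eq_refl Hz) as [t0 Ht]. exists t0. eauto.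
Qed.

Lemma Etotal : forall s x y, exists u, eval E (s :: [x; y]) u.
Proof. intros. apply (all_total e 2 s [x;y] eq_refl). Qed.

Definition M := PComp (ADDC (S P)) [PProj 1].
Definition EV := PComp E [PProj 2; PProj 3; PProj 0].
Definition LSSTEP := IF (PProj 1) (IF EV PZero (PComp PSucc [PProj 0])) (PProj 1).
Definition LSP := PPrec PZero LSSTEP.
Definition STATE := PComp LSP [M; PProj 0; PProj 1].
Definition HP := PComp (IF (PProj 0) (PProj 1) (PComp PRED [PProj 0])) [STATE; M].

Lemma ev_M : forall s x, eval M [s; x] (x + S P).
Proof. intros. eapply ev_comp1. apply (ev_proj 1 [s;x]). apply ev_addc. Qed.

Lemma ev_LSSTEP : forall i r s x u, eval E (s :: [x; i]) u ->
  eval LSSTEP (i :: r :: [s; x]) (match r with 0 => match u with 0 => 0 | S _ => S i end | S _ => r end).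
Proof.
  intros. unfold LSSTEP.
  assert (A : eval EV (i :: r :: [s; x]) u).
  { econstructor; [|exact H]. repeat constructor. }
  pose proof (ev_IF _ _ _ _ _ _ _ A (ev_zero _) (ev_comp1 _ _ _ _ _ (ev_proj 0 (i :: r :: [s;x])) (ev_succ [i]))).
  pose proof (ev_IF _ _ _ _ _ _ _ (ev_proj 1 (i :: r :: [s;x])) H0 (ev_proj 1 (i :: r :: [s;x]))).
  simpl in H1. destruct r; exact H1.
Qed.

Lemma LSP_total : forall s x m, exists st, eval LSP (m :: [s; x]) st.
Proof.
  intros s x. induction m. eexists; constructor; constructor.
  destruct IHm as [r Hr]. destruct (Etotal s x m) as [u Hu].
  eexists. econstructor. apply Hr. apply ev_LSSTEP; eauto.
Qed.

Lemma LSP_sound : forall s x m st, eval LSP (m :: [s; x]) st -> st = 0 \/ exists y, st = S y /\ f x <= y.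
Proof.
  intros s x. induction m; intros st H.
  - inversion H as [| | | |? ? ? ? H4| |]; subst. inversion H4; auto.
  - inversion H as [| | | | |? ? ? ? r ? Hr Hs|]; subst.
    destruct (Etotal s x m) as [u Hu].
    pose proof (det _ _ _ _ Hs (ev_LSSTEP m r s x u Hu)). subst st.
    destruct (IHm r Hr) as [->|[y [-> Hy]]].
    + destruct u; auto. right. exists m. split; auto. eapply Esound; eauto.
    + right; eauto.
Qed.

Lemma ev_HP : forall s x st, eval LSP ((x + S P) :: [s; x]) st ->
  eval HP [s; x] (match st with 0 => x + S P | S _ => pred st end).
Proof.
  intros. unfold HP. econstructor.
  - constructor. econstructor; [|exact H]. constructor. apply ev_M.
    constructor. apply (ev_proj 0 [s;x]). constructor. apply (ev_proj 1 [s;x]). constructor.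
    constructor. apply ev_M. constructor.
  - pose proof (ev_IF _ _ _ _ _ _ _ (ev_proj 0 [st; x + S P]) (ev_proj 1 [st; x + S P])
       (ev_comp1 _ _ _ _ _ (ev_proj 0 [st; x + S P]) (ev_pred st []))).
    simpl in H0. destruct st; exact H0.
Qed.

Lemma HP_total : forall s x, exists r, eval HP [s; x] r.
Proof. intros. destruct (LSP_total s x (x + S P)) as [st H]. eexists. apply ev_HP; eauto. Qed.

Lemma HP_sound : forall s x r, eval HP [s; x] r -> f x <= r.
Proof.
  intros. destruct (LSP_total s x (x + S P)) as [st Hst].
  pose proof (det _ _ _ _ H (ev_HP _ _ _ Hst)). subst r.
  destruct (LSP_sound _ _ _ _ Hst) as [->|[y [-> Hy]]]; simpl; auto.
  pose proof (f_bound f Hf x). lia.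
Qed.

Lemma HP_compl : forall x, exists t0, forall s, t0 <= s -> eval HP [s; x] (f x).
Proof.
  intros x. destruct (Ecompl x (f x) (le_n _)) as [t0 Ht]. exists t0. intros s Hs.
  assert (Z : forall m, m <= f x -> eval LSP (m :: [s; x]) 0).
  { induction m; intros Hm. constructor; constructor.
    destruct (Etotal s x m) as [u Hu].
    econstructor. apply IHm; lia.
    assert (u = 0). { destruct u; auto. apply Esound in Hu. lia. }
    subst u. apply (ev_LSSTEP m 0 s x 0 Hu). }
  assert (F : forall m, f x < m -> eval LSP (m :: [s; x]) (S (f x))).
  { induction m; intros Hm; [lia|].
    destruct (Nat.eq_dec m (f x)).
    - subst m. destruct (Ht s Hs) as [z Hz]. econstructor. apply Z; lia.
      apply (ev_LSSTEP (f x) 0 s x (S z) Hz).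
    - destruct (Etotal s x m) as [u Hu]. econstructor. apply IHm; lia.
      apply (ev_LSSTEP m (S (f x)) s x u Hu). }
  pose proof (ev_HP s x _ (F (x + S P) ltac:(pose proof (f_bound f Hf x); lia))).
  exact H.
Qed.

Definition ITH := PPrec (PProj 1) (PComp HP [PProj 2; PProj 1]).

Lemma ITH_step : forall k r s n y, eval HP [s; r] y -> eval (PComp HP [PProj 2; PProj 1]) (k :: r :: [s; n]) y.
Proof. intros. econstructor; [|exact H]. repeat constructor. Qed.

Lemma ITH_total : forall s n k, exists x, eval ITH (k :: [s; n]) x.
Proof.
  intros s n. induction k. eexists; constructor; apply (ev_proj 1 [s;n]).
  destruct IHk as [r Hr]. destruct (HP_total s r) as [y Hy].
  eexists. econstructor. apply Hr. apply ITH_step; eauto.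
Qed.

Lemma ITH_sound : forall s n k x, eval ITH (k :: [s; n]) x -> iter_fun f k n <= x.
Proof.
  intros s n. induction k; intros x H.
  - inversion H as [| | | |? ? ? ? H4| |]; subst. inversion H4; subst. simpl; auto.
  - inversion H as [| | | | |? ? ? ? r ? Hr Hs|]; subst.
    destruct (HP_total s r) as [y Hy].
    pose proof (det _ _ _ _ Hs (ITH_step k r s n y Hy)). subst x.
    apply HP_sound in Hy. specialize (IHk r Hr). rewrite iter_S'.
    eapply Nat.le_trans; [|exact Hy]. apply mono; auto.
Qed.

Lemma ITH_compl : forall n k, exists t0, forall s, t0 <= s -> eval ITH (k :: [s; n]) (iter_fun f k n).
Proof.
  intros n. induction k.
  - exists 0. intros. constructor. apply (ev_proj 1 [s;n]).
  - destruct IHk as [t1 H1]. destruct (HP_compl (iter_fun f k n)) as [t2 H2].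
    exists (max t1 t2). intros s Hs. econstructor. apply H1; lia.
    apply ITH_step. apply H2; lia.
Qed.

Definition TEST := PComp (SUBC P) [PComp ITH [PProj 2; PProj 0; PProj 1]].

Lemma ev_TEST : forall s n k x, eval ITH (k :: [s; n]) x -> eval TEST (s :: [n; k]) (x - P).
Proof.
  intros. eapply ev_comp1; [|apply ev_subc]. econstructor; [|exact H]. repeat constructor.
Qed.

Lemma part3_prog : ce_rel (fun n k => fstar f n <= k).
Proof.
  exists (PMu TEST). intros n k. rewrite (fstar_le f Hf). split.
  - intros Hle. destruct (ITH_compl n k) as [t0 Ht].
    pose proof (ev_TEST t0 n k _ (Ht t0 (le_n _))).
    replace (iter_fun f k n - P) with 0 in H by lia.
    destruct (min_exists (fun s => eval TEST (s :: [n; k]) 0) t0 H) as [s0 [Hs0 Hmin]].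
    exists s0. constructor; auto. intros z Hz.
    destruct (ITH_total z n k) as [x Hx]. pose proof (ev_TEST _ _ _ _ Hx).
    destruct (x - P) as [|w] eqn:E0.
    + apply Hmin in H0. lia.
    + eauto.
  - intros [y Hy]. inversion Hy; subst.
    destruct (ITH_total y n k) as [x Hx].
    pose proof (det _ _ _ _ H0 (ev_TEST _ _ _ _ Hx)).
    apply ITH_sound in Hx. lia.
Qed.
End USC.

Lemma part3 : upper_semi_computable f -> upper_semi_computable (fstar f).
Proof.
  intros [e He]. apply (part3_prog e). intros n k. apply He.
Qed.
End Fin.


Theorem lemma3 (f : nat -> nat) :
  sublinear_order f ->
  sublinear_order (fstar f)
  /\ (computable f -> computable (fstar f))
  /\ (upper_semi_computable f -> upper_semi_computable (fstar f))
  /\ (forall n i,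
        fstar f (iter_fun f i n) <= fstar f n
        /\ fstar f n - fstar f (iter_fun f i n) <= i).
Proof.
  intros Hf. split; [apply part1; auto|].
  split; [apply part2; auto|].
  split; [apply part3; auto|].
  apply part4; auto.
Qed.
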